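(* For every integer $s\ge 3$ and every $t\in\{0,1\}$ there exists $C>0$ such that every $K_{s,t}$-free graph $G$ admits a clique cover of size at most $C|G|^{2-1/s}$.
   Context: All graphs are finite and simple; $|G|$ is the number of vertices. A graph is $K_{s,t}$-free if it has no induced subgraph isomorphic to the complete bipartite graph $K_{s,t}$ (for $t=0$ this means no stable set of size $s$). A clique $X$ of $G$ covers an edge $uv$ if $u,v\in X$; a clique cover of $G$ is a collection of cliques of $G$ that together cover all edges of $G$, and its size is the number of cliques in it. *)

(* Defs.v *)
From mathcomp Require Import all_boot.
From Stdlib Require Import Reals.
Set Implicit Arguments. Unset Strict Implicit. Unset Printing Implicit Defensive.

Definition simple_graph (T : finType) (e : rel T) : Prop :=
  symmetric e /\ irreflexive e.

Definition stable (T : finType) (e : rel T) (S : {set T}) : Prop :=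
  forall x y, x \in S -> y \in S -> ~~ e x y.

Definition clique (T : finType) (e : rel T) (S : {set T}) : Prop :=
  forall x y, x \in S -> y \in S -> x != y -> e x y.

(* For t = 0 this is exactly a stable set of size s. *)
Definition has_induced_Kst (T : finType) (e : rel T) (s t : nat) : Prop :=
  exists A B : {set T},
    [/\ #|A| = s, #|B| = t, [disjoint A & B],
        stable e A /\ stable e B
      & forall a b, a \in A -> b \in B -> e a b].

Definition Kst_free (T : finType) (e : rel T) (s t : nat) : Prop :=
  ~ has_induced_Kst e s t.

Definition clique_cover (T : finType) (e : rel T) (cs : seq {set T}) : Prop :=
  (forall X, X \in cs -> clique e X) /\
  (forall u v, e u v -> exists2 X, X \in cs & (u \in X) && (v \in X)).

(* Main.v *)
Require Import Defs.
From mathcomp Require Import all_boot.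
From Stdlib Require Import Reals.
From mathcomp Require Import zify.
From Stdlib Require Import Lra Lia Psatz.
Set Implicit Arguments. Unset Strict Implicit.

Lemma subset_card_ex (T : finType) (A : {set T}) s :
  s <= #|A| -> exists B : {set T}, B \subset A /\ #|B| = s.
Proof.
elim: s => [|s IH] hs.
  by exists set0; rewrite sub0set cards0.
have [B [BA cB]] := IH (ltnW hs).
have : 0 < #|A :\: B| by rewrite cardsD (setIidPr BA); lia.
rewrite card_gt0 => /set0Pn [x]; rewrite inE => /andP [xB xA].
exists (x |: B); split.
  by rewrite subUset sub1set xA BA.
by rewrite cardsU1 xB cB.
Qed.

Section G.
Variables (T : finType) (e : rel T).
Hypothesis esym : symmetric e.
Hypothesis eirr : irreflexive e.

Definition sbound (S : {set T}) (s : nat) :=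
  forall A : {set T}, A \subset S -> stable e A -> #|A| <= s.

Lemma sbound_sub (S S' : {set T}) s : S' \subset S -> sbound S s -> sbound S' s.
Proof. move=> sub H A hA; apply: H; exact: subset_trans hA sub. Qed.

Lemma clique1 x : clique e [set x].
Proof. by move=> y z /set1P -> /set1P ->; rewrite eqxx. Qed.

Lemma stable1 x : stable e [set x].
Proof. by move=> y z /set1P -> /set1P ->; rewrite eirr. Qed.

Lemma ramsey s : forall k (S : {set T}), expn k s <= #|S| -> sbound S s ->
  exists K : {set T}, [/\ K \subset S, clique e K & #|K| = k].
Proof.
elim: s => [|s IHs] k S.
- rewrite expn0 => hS hb.
  have [x xS] : exists x, x \in S by apply/set0Pn; rewrite -card_gt0.
  have := hb [set x]; rewrite sub1set xS cards1 => /(_ isT (stable1 (x:=x))). done.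
- elim: k S => [|k IHk] S hS hb.
  + exists set0; split; [exact: sub0set| by move=> ? ?; rewrite inE | exact: cards0].
  + have [x xS] : exists x, x \in S.
      apply/set0Pn; rewrite -card_gt0; apply: leq_trans hS; by rewrite expn_gt0.
    set B := [set y | e x y].
    set N := (S :\ x) :&: B.
    set M := (S :\ x) :\: B.
    have cardS : #|S| = (#|N| + #|M|).+1.
      by rewrite cardsID (cardsD1 x S) xS.
    have MS : M \subset S by apply/subsetP => y; rewrite !inE => /andP [_ /andP [_ ->]].
    have NS : N \subset S by apply/subsetP => y; rewrite !inE => /andP [/andP [_ ->] _].
    have hk1 : expn k s <= expn k.+1 s.
      case: (s) => [|s']; first by [].
      by rewrite leq_exp2r.
    case: (leqP (expn k.+1 s) #|M|) => hM.
    * have := IHs k.+1 M hM.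
      case.
        move=> A sA stA.
        have xA : x \notin A.
          apply/negP => /(subsetP sA); by rewrite /M !inE eqxx /= andbF.
        have hAM : forall y, y \in A -> ~~ e x y.
          by move=> y /(subsetP sA); rewrite !inE => /andP [].
        have := hb (x |: A); rewrite cardsU1 xA.
        apply.
          by rewrite subUset sub1set xS (subset_trans sA MS).
        move=> y z; rewrite !inE => /orP [/eqP ->|yA] /orP [/eqP ->|zA].
        - by rewrite eirr.
        - exact: hAM.
        - by rewrite esym; apply: hAM.
        - exact: stA.
      move=> K [KM cK cardK]; exists K; split => //; exact: subset_trans KM MS.
    * case: (leqP (expn k s.+1) #|N|) => hN.
      - have [K [KN cK cardK]] := IHk N hN (sbound_sub NS hb).
        have xK : x \notin K.
          apply/negP => /(subsetP KN); by rewrite /N !inE eqxx.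
        exists (x |: K); split.
        + by rewrite subUset sub1set xS (subset_trans KN NS).
        + move=> y z; rewrite !inE => /orP [/eqP ->|yK] /orP [/eqP ->|zK].
          -- by rewrite eqxx.
          -- move=> _; move: (subsetP KN z zK); by rewrite !inE => /andP [].
          -- move=> _; rewrite esym; move: (subsetP KN y yK); by rewrite !inE => /andP [].
          -- exact: cK.
        + by rewrite cardsU1 xK cardK.
      - exfalso.
        have e1 : expn k.+1 s.+1 = expn k.+1 s + k * expn k.+1 s by rewrite expnS mulSn.
        have e2 : expn k s.+1 = k * expn k s by rewrite expnS.
        have e3 : k * expn k s <= k * expn k.+1 s by rewrite leq_mul2l hk1 orbT.
        lia.
Qed.

Lemma cover s k : 0 < k -> forall S : {set T}, sbound S s ->
  exists cs : seq {set T},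
   [/\ forall K, K \in cs -> K \subset S /\ clique e K,
       forall y, y \in S -> exists2 K, K \in cs & y \in K &
       k * size cs <= #|S| + k * expn k s].
Proof.
move=> k0 S.
move: {2}#|S| (erefl #|S|) => m; elim/ltn_ind: m S => m IH S hm hb.
case: (ltnP #|S| (expn k s)) => hS.
- exists [seq [set y] | y <- enum S]; split.
  + move=> K /mapP [y]; rewrite mem_enum => yS ->; split; last exact: clique1.
    by rewrite sub1set.
  + move=> y yS; exists [set y]; last by rewrite set11.
    by apply/mapP; exists y; rewrite ?mem_enum.
  + rewrite size_map -cardE.
    apply: leq_trans (leq_addl #|S| _); by rewrite leq_mul2l (ltnW hS) orbT.
- have [K [KS cK cardK]] := ramsey hS hb.
  have cD : #|S :\: K| = #|S| - k by rewrite cardsD (setIidPr KS) cardK.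
  have kS : k <= #|S| by rewrite -cardK subset_leq_card.
  have [|cs [h1 h2 h3]] := IH (#|S :\: K|) _ (S :\: K) erefl (sbound_sub (subsetDl S K) hb).
    lia.
  exists (K :: cs); split.
  + move=> X; rewrite inE => /orP [/eqP ->|XS]; first by [].
    have [h h'] := h1 X XS; split => //; exact: subset_trans h (subsetDl S K).
  + move=> y yS; case: (boolP (y \in K)) => yK.
      by exists K; rewrite ?inE ?eqxx.
    have yD : y \in S :\: K by rewrite inE yK yS.
    have [X XS yX] := h2 y yD.
    by exists X; rewrite // inE XS orbT.
  + rewrite /= mulnS; lia.
Qed.

Lemma allcover s k (l : seq T) : 0 < k -> (forall v, sbound [set u | e v u] s) ->
  exists cs : seq {set T},
   [/\ forall X, X \in cs -> clique e X,
       forall v, v \in l -> forall u, e v u -> exists2 X, X \in cs & (u \in X) && (v \in X) &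
       k * size cs <= size l * (#|T| + k * expn k s)].
Proof.
move=> k0 hb; elim: l => [|v l [cs [h1 h2 h3]]].
  by exists [::]; split => //; rewrite muln0.
have [cv [c1 c2 c3]] := cover k0 (hb v).
exists ([seq v |: K | K <- cv] ++ cs); split.
- move=> X; rewrite mem_cat => /orP [/mapP [K KV ->]|]; last exact: h1.
  have [KN cK] := c1 K KV.
  have hv : forall z, z \in K -> e v z by move=> z /(subsetP KN); rewrite inE.
  move=> y z; rewrite !inE => /orP [/eqP ->|yK] /orP [/eqP ->|zK].
  + by rewrite eqxx.
  + by move=> _; apply: hv.
  + by move=> _; rewrite esym; apply: hv.
  + exact: cK.
- move=> w; rewrite inE => /orP [/eqP ->|wl] u euv.
  + have uN : u \in [set u | e v u] by rewrite inE.
    have [K KV uK] := c2 u uN.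
    exists (v |: K); first by rewrite mem_cat map_f.
    by rewrite !inE uK eqxx orbT.
  + have [X Xcs hX] := h2 w wl u euv.
    by exists X; rewrite // mem_cat Xcs orbT.
- rewrite size_cat size_map mulnDr /= mulSn.
  have : #|[set u | e v u]| <= #|T| by apply: max_card.
  move=> hT; move: c3 h3 hT; set a := k * size cv; set b := k * size cs; set c := #|[set u | e v u]|; set d := k * expn k s; set f := #|T|. rewrite mulnDr. set g := size l * d; clearbody a b c d f g. move=> *; nia.
Qed.

End G.

Lemma INR_expn a b : INR (expn a b) = (INR a ^ b)%R.
Proof.
elim: b => [|b IH]; first by rewrite expn0.
by rewrite expnS mult_INR IH.
Qed.

Lemma root_ex s n : 0 < s -> 0 < n ->
  exists k, [/\ 0 < k, expn k s <= n & n < expn k.+1 s].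
Proof.
move=> s0; elim: n => [|n IH] // _.
case: n IH => [|n] IH.
  exists 1; rewrite exp1n; split => //.
  by have := ltn_exp2r 1 2 s0; rewrite exp1n => ->.
have [k [k0 h1 h2]] := IH isT.
case: (ltnP n.+2 (expn k.+1 s)) => h.
  by exists k; split => //; apply: leq_trans h1 _.
have hq : n.+2 = expn k.+1 s by apply/eqP; rewrite eqn_leq h2 h.
exists k.+1; split => //; rewrite hq ?leqnn ?ltn_exp2r //.
Qed.

Theorem mainTheorem6 :
  forall (s t : nat), 3 <= s -> t <= 1 ->
  exists C : R, (0 < C)%R /\
    forall (T : finType) (e : rel T),
      simple_graph e -> Kst_free e s t ->
      exists cs : seq {set T},
        clique_cover e cs /\
        (INR (size cs) <= C * Rpower (INR #|T|) (2 - 1 / INR s))%R.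
Proof.
move=> s t hs ht; exists 4%R; split; first lra.
move=> T e [esym eirr] hfree.
have s0 : 0 < s by lia.
have hb : forall v, sbound e [set u | e v u] s.-1.
  move=> v A sA stA; rewrite leqNgt; apply/negP => hA.
  have hA' : s <= #|A| by lia.
  have [A' [A'A cA']] := subset_card_ex hA'.
  apply: hfree.
  have stA' : stable e A' by move=> x y xA yA; apply: stA; apply: (subsetP A'A).
  have vA : forall a, a \in A' -> e v a.
    by move=> a aA; move: (subsetP sA a (subsetP A'A a aA)); rewrite inE.
  case: t ht => [|[|t]] ht //.
  + exists A', set0; split => //.
    * exact: cards0.
    * by rewrite -setI_eq0 setI0.
    * by split => // x y; rewrite inE.
    * by move=> a b _; rewrite inE.
  + exists A', [set v]; split => //.
    * exact: cards1.
    * rewrite disjoint_sym disjoints1; apply/negP => xA; move: (vA v xA); by rewrite eirr.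
    * split => //; by move=> y z /set1P -> /set1P ->; rewrite eirr.
    * by move=> a b aA /set1P ->; rewrite esym; apply: vA.
have cov : forall cs : seq {set T}, (forall X, X \in cs -> clique e X) ->
    (forall v, v \in enum T -> forall u, e v u ->
       exists2 X, X \in cs & (u \in X) && (v \in X)) -> clique_cover e cs.
  move=> cs h1 h2; split => // u v euv.
  have [X Xcs hX] := h2 u (mem_enum _ u) v euv.
  by exists X; rewrite // andbC.
have [n0|n0] : #|T| = 0 \/ 0 < #|T| by lia.
- have [cs [h1 h2 h3]] := allcover esym eirr (s:=s.-1) (k:=1) (enum T) isT hb.
  exists cs; split; first exact: cov.
  rewrite -cardE n0 mul0n mul1n leqn0 in h3.
  rewrite (eqP h3) /=.
  have : (0 < Rpower (INR #|T|) (2 - 1 / INR s))%R by unfold Rpower; apply: exp_pos.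
  move=> H; apply: Rlt_le; apply: Rmult_lt_0_compat => //; apply: IZR_lt; reflexivity.
- have [k [k0 hk1 hk2]] := root_ex s0 n0.
  have [cs [h1 h2 h3]] := allcover esym eirr (s:=s.-1) (k:=k) (enum T) k0 hb.
  exists cs; split; first exact: cov.
  rewrite -cardE in h3.
  have ek : k * expn k s.-1 = expn k s by rewrite -expnS prednK.
  rewrite ek in h3.
  have hn1 : k * size cs <= 2 * #|T| * #|T|.
    move: h3 hk1; set P := expn k s; set Z := k * size cs; set N := #|T|; clearbody P Z N; move=> ha hb2; have hc : N * P <= N * N by rewrite leq_mul2l hb2 orbT. lia.
  have hn2 : #|T| <= expn (2 * k) s.
    apply: leq_trans (ltnW hk2) _; rewrite leq_exp2r //; lia.
  have HR1 : (INR k * INR (size cs) <= 2 * INR #|T| * INR #|T|)%R.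
    rewrite -mult_INR (_ : 2%R = INR 2) // -!mult_INR; apply: le_INR; exact/leP.
  have HR2 : (INR #|T| <= (2 * INR k) ^ s)%R.
    rewrite (_ : 2%R = INR 2) // -mult_INR -INR_expn; apply: le_INR; exact/leP.
  have Npos : (0 < INR #|T|)%R by apply: lt_0_INR; apply/ltP.
  have Kpos : (1 <= INR k)%R by rewrite (_ : 1%R = INR 1) //; apply: le_INR; apply/leP.
  have Spos : (0 < INR s)%R by apply: lt_0_INR; apply/ltP.
  have Zpos : (0 <= INR (size cs))%R by apply: pos_INR.
  set N := INR #|T| in HR1 HR2 Npos *.
  set K := INR k in HR1 HR2 Kpos *.
  set Z := INR (size cs) in HR1 Zpos *.
  have Ppos : (0 < Rpower N (1 / INR s))%R by unfold Rpower; apply: exp_pos.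
  have hP : (Rpower N (1 / INR s) <= 2 * K)%R.
    have := Rle_Rpower_l N ((2 * K) ^ s)%R (1 / INR s)%R.
    rewrite -Rpower_pow; last lra.
    rewrite Rpower_mult (_ : (INR s * (1 / INR s) = 1)%R); last by field; lra.
    rewrite Rpower_1; last lra.
    apply.
      apply: Rlt_le; apply: Rdiv_lt_0_compat; lra.
    split; first lra.
    by rewrite Rpower_pow; lra.
  set P := Rpower N (1 / INR s) in Ppos hP.
  have hRP : (Rpower N (2 - 1 / INR s) = N * N / P)%R.
    rewrite (_ : (2 - 1 / INR s = INR 2 + - (1 / INR s))%R); last by simpl; ring.
    rewrite Rpower_plus Rpower_Ropp Rpower_pow //=; rewrite /P; field.
    apply: Rgt_not_eq; exact: Ppos.
  rewrite hRP.
  have hZP : (Z * P <= 4 * N * N)%R by nra.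
  apply: (Rmult_le_reg_r P) => //.
  rewrite (_ : (4 * (N * N / P) * P = 4 * N * N)%R) //; field; lra.
Qed.
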